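(* Let $m=2^{l_m}$ with $l_m\ge 1$, let $(v_0,\dots,v_{m-1})$ be a Cantor basis of $\mathbb{F}_{2^m}$, and let $l$ be an integer with $0\le l<m/2$. Put $n=m\cdot 2^l$ and $$\Sigma := v_{l+m/2}+V_l=\{v_{l+m/2}+u : u\in V_l\},\qquad \Omega:=\Sigma\cup\phi_2(\Sigma)\cup\phi_2^{\circ 2}(\Sigma)\cup\cdots\cup\phi_2^{\circ(m-1)}(\Sigma).$$ Then $\mathrm{Ord}_{\phi_2}(\Sigma)=m$, the sets $\Sigma,\phi_2(\Sigma),\dots,\phi_2^{\circ(m-1)}(\Sigma)$ are pairwise disjoint (so $\Sigma$ is a Frobenius partition of $\Omega$), and $|\Omega|=n$.
   Context: A Cantor basis of $\mathbb{F}_{2^m}$ (for $m$ a power of $2$) is an $\mathbb{F}_2$-basis $(v_0,\dots,v_{m-1})$ of $\mathbb{F}_{2^m}$ with $v_0=1$ and $v_i^2+v_i=v_{i-1}$ for $0<i<m$. For $0\le i\le m$ let $V_0=\{0\}$ and $V_i=\mathrm{span}_{\mathbb{F}_2}\{v_0,\dots,v_{i-1}\}$. $\phi_2:\mathbb{F}_{2^m}\to\mathbb{F}_{2^m}$, $a\mapsto a^2$, is the Frobenius map; $\phi_2^{\circ j}$ denotes its $j$-fold iterate, and for a set $S$, $\phi_2(S)=\{\phi_2(s):s\in S\}$. For a set $S\subseteq\mathbb{F}_{2^m}$, $\mathrm{Ord}_{\phi_2}(S)$ is the least positive integer $j$ with $\phi_2^{\circ j}(S)=S$. Given $\mathrm{Ord}_{\phi_2}(\Sigma)=j$,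 $\Sigma$ is called a Frobenius partition of $\Omega$ if $\Omega=\Sigma\cup\phi_2(\Sigma)\cup\dots\cup\phi_2^{\circ(j-1)}(\Sigma)$ with these $j$ sets pairwise disjoint. *)

(* Defs.v *)
From HB Require Import structures.
From mathcomp Require Import all_boot all_order all_algebra all_fingroup all_field.
Set Implicit Arguments. Unset Strict Implicit. Unset Printing Implicit Defensive.
Import GRing.Theory.
Local Open Scope ring_scope.

(* F_2-span of v_0, ..., v_{i-1}: all 0/1 combinations; V_0 = {0}. *)
Definition Vspan (F : finFieldType) (v : nat -> F) (i : nat) : {set F} :=
  [set \sum_(j in S) v (nat_of_ord j) | S : {set 'I_i}].

Definition F2_basis (F : finFieldType) (m : nat) (v : nat -> F) : Prop :=
  (forall S : {set 'I_m}, \sum_(j in S) v (nat_of_ord j) = 0 -> S = set0)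
  /\ (forall x : F, exists S : {set 'I_m}, x = \sum_(j in S) v (nat_of_ord j)).

Definition cantor_basis (F : finFieldType) (m : nat) (v : nat -> F) : Prop :=
  F2_basis m v /\ v 0%N = 1 /\
  (forall i : nat, (0 < i < m)%N -> v i ^+ 2 + v i = v i.-1).

Definition phi2 (F : finFieldType) (a : F) : F := a ^+ 2.
Definition phi2_set (F : finFieldType) (j : nat) (S : {set F}) : {set F} :=
  [set iter j (@phi2 F) s | s in S].

Definition Ord_phi2_is (F : finFieldType) (S : {set F}) (j : nat) : Prop :=
  (0 < j)%N /\ phi2_set j S = S /\
  (forall k : nat, (0 < k < j)%N -> phi2_set k S <> S).

(* Main.v *)
Require Import Defs.
From HB Require Import structures.
From mathcomp Require Import all_boot all_order all_algebra all_fingroup all_field zify.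
Import GRing.Theory.
Local Open Scope ring_scope.


Section Char2.
Context {F : finFieldType}.
Hypothesis c2 : (2%:R : F) = 0.

Lemma addxx (x : F) : x + x = 0.
Proof. by rewrite -mulr2n -mulr_natr c2 mulr0. Qed.

Lemma oppc2 (x : F) : - x = x.
Proof. by apply/eqP; rewrite eq_sym -subr_eq0 opprK addxx. Qed.

Lemma addc2 (x y : F) : x + y = 0 -> x = y.
Proof. by move=> h; apply/eqP; rewrite -subr_eq0 oppc2 h. Qed.

Lemma sqrD (x y : F) : (x + y) ^+ 2 = x ^+ 2 + y ^+ 2.
Proof.
rewrite !expr2 mulrDl !mulrDr [y * x]mulrC.
by rewrite addrA -(addrA (x * x)) addxx addr0.
Qed.

Definition L (x : F) := x ^+ 2 + x.

Lemma phi2D (x y : F) : phi2 (x + y) = phi2 x + phi2 y.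
Proof. exact: sqrD. Qed.

Lemma iterphiD j (x y : F) : iter j (@phi2 F) (x + y) = iter j (@phi2 F) x + iter j (@phi2 F) y.
Proof. by elim: j => //= j ->; rewrite phi2D. Qed.

Lemma LD x y : L (x + y) = L x + L y.
Proof. rewrite /L sqrD. rewrite -!addrA; congr (_ + _); by rewrite addrCA. Qed.

Lemma iterLD k x y : iter k L (x + y) = iter k L x + iter k L y.
Proof. by elim: k => //= k ->; rewrite LD. Qed.

Lemma L0 : L 0 = 0. Proof. by rewrite /L expr2 mulr0 addr0. Qed.
Lemma iterL0 k : iter k L 0 = 0. Proof. by elim: k => //= k ->; rewrite L0. Qed.
Lemma L1 : L 1 = 0. Proof. by rewrite /L expr1n addxx. Qed.

Lemma Lphi (x : F) : L (phi2 x) = phi2 (L x).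
Proof. by rewrite /L /phi2 sqrD. Qed.

Lemma iterLphi k (x : F) : iter k L (phi2 x) = phi2 (iter k L x).
Proof. by elim: k => //= k ->; rewrite Lphi. Qed.

Lemma iterLiterphi k j (x : F) : iter k L (iter j (@phi2 F) x) = iter j (@phi2 F) (iter k L x).
Proof. by elim: j => //= j <-; rewrite iterLphi. Qed.

Lemma phiL (x : F) : phi2 x = x + L x.
Proof. by rewrite /L addrCA addxx addr0. Qed.

Lemma iterphi_pow2 t (x : F) : iter (2 ^ t) (@phi2 F) x = x + iter (2 ^ t) L x.
Proof.
elim: t x => [|t IH] x; first by rewrite /= phiL.
rewrite expnS mul2n -addnn !iterD IH IH iterLD.
by rewrite addrA -(addrA x) addxx addr0.
Qed.

Lemma iterphi_exp j (x : F) : iter j (@phi2 F) x = x ^+ (2 ^ j).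
Proof. by elim: j => //= j ->; rewrite /phi2 -exprM expnSr. Qed.

Lemma phi2_inj : injective (@phi2 F).
Proof.
move=> x y h; apply: addc2.
have : (x + y) ^+ 2 = 0 by rewrite sqrD -/(phi2 x) -/(phi2 y) h addxx.
by move/eqP; rewrite expf_eq0 /= => /eqP.
Qed.

Lemma iterphi_inj j : injective (iter j (@phi2 F)).
Proof. by elim: j => //= j IH x y /phi2_inj /IH. Qed.

End Char2.

Lemma swap4 {F : finFieldType} (c2 : (2%:R : F) = 0) (A B C D : F) :
  A + B = C + D -> A + C = D + B.
Proof.
move=> e; rewrite -[A](addrK B) e oppc2 // addrC !addrA.
by rewrite (addxx c2) add0r.
Qed.

Lemma card_bigcup_disj (T : finType) (A : nat -> {set T}) (K s : nat) :
  (forall i j, (i < j < K)%N -> [disjoint A i & A j]) ->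
  (forall i, #|A i| = s) ->
  forall k, (k <= K)%N -> #|\bigcup_(i < k) A i| = (k * s)%N.
Proof.
move=> hd hs; elim=> [|k IH] hk; first by rewrite big_ord0 cards0.
rewrite big_ord_recr /= cardsU IH ?(ltnW hk) // hs.
rewrite disjoint_setI0 ?cards0 ?subn0 1?mulSn 1?addnC //.
rewrite disjoint_sym; apply/bigcup_disjointP => i _.
by rewrite disjoint_sym; apply: hd; rewrite (ltn_ord i) hk.
Qed.


Section Main.
Variable F : finFieldType.
Hypothesis c2 : (2%:R : F) = 0.
Variables (m h k l : nat) (v : nat -> F).
Hypothesis hm : m = (2 * h)%N.
Hypothesis hh : h = (2 ^ k)%N.
Hypothesis hl : (l < h)%N.
Hypothesis hper : forall x : F, iter m (@phi2 F) x = x.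
Hypothesis hv0 : v 0%N = 1.
Hypothesis hvL : forall i, (0 < i < m)%N -> v i ^+ 2 + v i = v i.-1.

Local Notation L := (@L F).
Local Notation phi := (@phi2 F).

Lemma iterL_v j i : (j <= i)%N -> (i < m)%N -> iter j L (v i) = v (i - j).
Proof.
elim: j => [|j IH] hji him; first by rewrite subn0.
rewrite iterS IH ?(ltnW hji) // /L hvL; last first.
  by rewrite subn_gt0 hji /= (leq_ltn_trans (leq_subr _ _) him).
by rewrite subnS.
Qed.

Lemma iterL_v0 j i : (i < j)%N -> (i < m)%N -> iter j L (v i) = 0.
Proof.
move=> hij him.
have -> : j = ((j - i).-1.+1 + i)%N by rewrite prednK ?subn_gt0 // subnK // ltnW.
by rewrite iterD iterL_v // subnn hv0 iterSr (L1 c2) iterL0.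
Qed.

Lemma hpos : (0 < h)%N. Proof. by rewrite hh expn_gt0. Qed.
Lemma hltm : (h < m)%N.
Proof. by rewrite hm mul2n -addnn -{1}(addn0 h) ltn_add2l hpos. Qed.
Lemma llm : (l < m)%N. Proof. exact: ltn_trans hl hltm. Qed.

Definition W (x : F) := iter l L x = 0.

Lemma WD x y : W x -> W y -> W (x + y).
Proof. by rewrite /W (iterLD c2) => -> ->; rewrite addr0. Qed.

Lemma Wphi j x : W x -> W (iter j phi x).
Proof. by rewrite /W (iterLiterphi c2) => ->; elim: j => //= j ->; rewrite /phi2 expr2 mulr0. Qed.

Lemma V_W u : u \in Vspan v l -> W u.
Proof.
case/imsetP => S _ ->; rewrite /W.
rewrite (big_morph (iter l L) (iterLD c2 l) (iterL0 l)).
apply: big1 => i _; apply: iterL_v0 => //.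
exact: ltn_trans (ltn_ord i) llm.
Qed.

Lemma iter_mul q x : iter (q * m) phi x = x.
Proof. by elim: q => // q IH; rewrite mulSn iterD IH hper. Qed.

Lemma iter_mod aa x : iter aa phi x = iter (aa %% m) phi x.
Proof. by rewrite {1}(divn_eq aa m) iterD iter_mul. Qed.

Definition aa := v (l + h).
Definition P d := W (iter d phi aa + aa).

Lemma P_add d1 d2 : P d1 -> P d2 -> P (d1 + d2).
Proof.
rewrite /P => h1 h2.
have -> : iter (d1 + d2) phi aa + aa = iter d1 phi (iter d2 phi aa + aa) + (iter d1 phi aa + aa).
  by rewrite iterD (iterphiD c2) addrA -[_ + iter d1 phi aa + iter d1 phi aa]addrA (addxx c2) addr0.
by apply: WD => //; apply: Wphi.
Qed.

Lemma P_mul d q : P d -> P (d * q).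
Proof.
move=> hd; elim: q => [|q IH]; first by rewrite muln0 /P /= (addxx c2) /W iterL0.
by rewrite mulnS; apply: P_add.
Qed.

Lemma P_mod d : P d -> P (d %% m).
Proof. by rewrite /P iter_mod. Qed.

Lemma notP_h : ~ P h.
Proof.
rewrite /P hh (iterphi_pow2 c2) -hh addrAC (addxx c2) add0r /W /aa.
rewrite iterL_v ?addnK ?leq_addl //; last by rewrite hm mul2n -addnn ltn_add2r.
rewrite iterL_v ?subnn ?hv0 ?llm //.
by move/eqP; rewrite oner_eq0.
Qed.

Lemma core d : (0 < d < m)%N -> ~ P d.
Proof.
case/andP => d0 dm hP.
have [c _ hc] := Bezoutl m d0.
set g := gcdn d m in hc.
have gd : (g <= d)%N by rewrite dvdn_leq // dvdn_gcdl.
have Pg : P g.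
  case/dvdnP: hc => e he.
  have := @P_mod _ (P_mul d e hP); rewrite mulnC -he addnC modnMDl modn_small //.
  exact: leq_ltn_trans gd dm.
have : (g %| 2 ^ k.+1)%N by rewrite expnS -hh -hm dvdn_gcdr.
case/(dvdn_pfactor _ _ (isT : prime 2)) => s hs gE.
have sk : (s <= k)%N.
  have : (g < 2 ^ k.+1)%N by rewrite expnS -hh -hm (leq_ltn_trans gd).
  by rewrite gE ltn_exp2l.
apply: notP_h.
have -> : h = (g * 2 ^ (k - s))%N by rewrite hh gE -expnD subnKC.
exact: P_mul.
Qed.

End Main.


Theorem proposition1 (lm : nat) (F : finFieldType) (v : nat -> F) (l : nat) :
  (1 <= lm)%N ->
  #|F| = (2 ^ (2 ^ lm))%N ->
  cantor_basis (2 ^ lm) v ->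
  (l < (2 ^ lm) %/ 2)%N ->
  let m := (2 ^ lm)%N in
  let n := (m * 2 ^ l)%N in
  let Sigma : {set F} := [set v (l + m %/ 2)%N + u | u in Vspan v l] in
  let Omega : {set F} := \bigcup_(j < m) phi2_set j Sigma in
  [/\ Ord_phi2_is Sigma m,
      (forall i j : nat, (i < j < m)%N -> [disjoint phi2_set i Sigma & phi2_set j Sigma])
    & #|Omega| = n].
Proof.
case: lm => // k _ hcard [[_ hspan] [hv0 hvL]].
set h := (2 ^ k)%N.
have hm : (2 ^ k.+1 = 2 * h)%N by rewrite expnS.
have hdiv : ((2 ^ k.+1) %/ 2 = h)%N by rewrite hm mulKn.
rewrite hdiv => hl m n Sigma Omega.
have c2 : (2%:R : F) = 0 by apply: pcharf0; apply: (card_finPcharP hcard).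
have hper : forall x : F, iter m (@phi2 F) x = x.
  by move=> x; rewrite iterphi_exp -hcard expf_card.
pose a := v (l + h)%N.
have hS : Sigma = [set a + u | u in Vspan v l] by rewrite /Sigma /m hdiv.
have X : forall d x, (0 < d < m)%N -> x \in Sigma -> iter d (@phi2 F) x \in Sigma -> False.
  move=> d x hd; rewrite hS => /imsetP [u1 hu1 ->] /imsetP [u2 hu2 e].
  have K1 := @core F c2 m h k l v hm (erefl h) hl hper hv0 hvL d hd.
  suff hP : P F h l v d by exact: K1 hP.
  rewrite /P /aa -/a.
  move: e; rewrite (iterphiD c2) => /(swap4 c2) ->.
  have VW := @V_W F c2 m h k l v hm (erefl h) hl hv0 hvL.
  apply: (@WD F c2 l); first exact: VW.
  apply: (@Wphi F c2 l); exact: VW.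
have a0 : a \in Sigma.
  rewrite hS; apply/imsetP; exists 0; last by rewrite addr0.
  by apply/imsetP; exists set0 => //; rewrite big_set0.
have hdisj : forall i j, (i < j < m)%N -> [disjoint phi2_set i Sigma & phi2_set j Sigma].
  move=> i j /andP [hij hjm]; rewrite -setI_eq0; apply: contraT.
  case/set0Pn => y /setIP [/imsetP [x1 hx1 ->] /imsetP [x2 hx2 e]].
  exfalso; apply: (X (m - j + i)%N x1) => //; first by apply/andP; split; lia.
  by rewrite iterD e -iterD subnK ?(ltnW hjm) // hper.
have hcardV : #|Vspan v l| = (2 ^ l)%N.
  have hinjm : {in [set: {set 'I_m}] &, injective (fun S : {set 'I_m} => \sum_(j in S) v j)}.
    apply/imset_injP.
    have cm : #|[set: {set 'I_m}]| = (2 ^ m)%N by rewrite -powersetT card_powerset cardsT card_ord.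
    rewrite cm.
    have -> : [set \sum_(j in S) v j | S : {set 'I_m} in [set: {set 'I_m}]] = [set: F].
      apply/setP => x; rewrite inE; have [S ->] := hspan x; exact: imset_f.
    by rewrite cardsT hcard.
  have hlm : (l <= m)%N by lia.
  pose wid := fun j : 'I_l => widen_ord hlm j.
  have widi : injective wid by move=> i j; rewrite /wid => /(congr1 val) /= /val_inj.
  have hinjl : injective (fun S : {set 'I_l} => \sum_(j in S) v j).
    move=> S1 S2 e; apply: (imset_inj widi); apply: hinjm; rewrite ?in_setT //.
    by rewrite /= !(big_imset _ (in2W widi)) /=.
  have cl : #|[set: {set 'I_l}]| = (2 ^ l)%N by rewrite -powersetT card_powerset cardsT card_ord.
  by rewrite /Vspan (card_imset _ hinjl) -cl cardsT.
split.
- split; first by rewrite expn_gt0.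
  split.
    by rewrite /phi2_set (eq_imset _ hper) imset_id.
  move=> j hj e; apply: (X j a hj a0); rewrite -e; exact: imset_f.
- exact: hdisj.
rewrite /Omega (@card_bigcup_disj _ (fun j => phi2_set j Sigma) m (2 ^ l)  hdisj _ m (leqnn m)) //.
move=> i; rewrite (card_imset _ (iterphi_inj c2 i)) hS (card_imset _ (addrI a)) //.
Qed.
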